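(* There exists a linear bijection $f:\mathbb{R}^2\to\mathbb{C}$ of real vector spaces such that $f(\mathcal{E})=\mathcal{R}$ and $f(\mathbb{Z}^2)=\mathbb{Z}+\mathbb{Z}\alpha$.
   Context: Let $a,b$ be integers with $-a+1\le b\le -2$, let $\beta$ be the real dominant root of $x^3-ax^2-bx-1$, and assume its conjugates $\alpha,\overline\alpha$ are non-real. Let $T_0=1$, $T_1=a$, $T_2=a^2+b$, $T_{n+3}=aT_{n+2}+bT_{n+1}+T_n$. Admissibility: a digit sequence with digits in $\{0,\dots,a-1\}$ is admissible if every block satisfies $d_jd_{j-1}\cdots d_{j-k}\le_{\mathrm{lex}}(a-1)(a+b-1)(a+b)\cdots(a+b)$ (same length). Each $N\in\mathbb{Z}^+$ has a unique admissible $T$-representation $N=\sum_j d_jT_j$. We write $\delta(N)=N(1/\beta,1/\beta^2)-(\sum_{j\ge1}d_jT_{j-1},\sum_{j\ge2}d_jT_{j-2})$, and $\mathcal{E}=\overline{\{\delta(N):N\in\mathbb{Z}^+\}}\subset\mathbb{R}^2$. The Rauzy fractal is $\mathcal{R}=\{\sum_{i\ge2}d_i\alpha^i:(d_i)_{i\ge2}\text{ admissible}\}\subset\mathbb{C}$. *)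

(* Defs.v *)
From Stdlib Require Import Reals ZArith Lra Lia.
Open Scope R_scope.

Definition Cx := (R * R)%type.
Definition Cadd (z w : Cx) : Cx := (fst z + fst w, snd z + snd w).
Definition Cmul (z w : Cx) : Cx :=
  (fst z * fst w - snd z * snd w, fst z * snd w + snd z * fst w).
Definition CofR (x : R) : Cx := (x, 0).
Fixpoint Cpow (z : Cx) (n : nat) : Cx :=
  match n with O => (1, 0) | S m => Cmul z (Cpow z m) end.
Definition Cnorm2 (z : Cx) : R := fst z * fst z + snd z * snd z.

Fixpoint Ttrip (a b : Z) (n : nat) : Z * Z * Z :=
  match n with
  | O => (1%Z, a, (a * a + b)%Z)
  | S m => let '(x, y, z) := Ttrip a b m in (y, z, (a * z + b * y + x)%Z)
  end.
(* T 0 = 1, T 1 = a, T 2 = a^2 + b, T (n+3) = a T(n+2) + b T(n+1) + T n *)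
Definition T (a b : Z) (n : nat) : Z := let '(x, _, _) := Ttrip a b n in x.

Fixpoint sumZ (f : nat -> Z) (n : nat) : Z :=
  match n with O => 0%Z | S m => (sumZ f m + f m)%Z end.

Fixpoint sumC (f : nat -> Cx) (n : nat) : Cx :=
  match n with O => (0, 0) | S m => Cadd (sumC f m) (f m) end.

Definition wword (a b : Z) (i : nat) : Z :=
  match i with O => (a - 1)%Z | 1%nat => (a + b - 1)%Z | _ => (a + b)%Z end.

Definition lex_le (u w : nat -> Z) (n : nat) : Prop :=
  (forall i, (i < n)%nat -> u i = w i) \/
  exists i, (i < n)%nat /\ (forall l, (l < i)%nat -> u l = w l) /\ (u i < w i)%Z.

Definition admissible (a b : Z) (lo : nat) (d : nat -> Z) : Prop :=
  (forall j, (lo <= j)%nat -> (0 <= d j <= a - 1)%Z) /\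
  (forall j k, (lo + k <= j)%nat ->
     lex_le (fun i => d (j - i)%nat) (wword a b) (S k)).

Definition Trep (a b : Z) (N : Z) (L : nat) (d : nat -> Z) : Prop :=
  admissible a b 0 d /\ (forall j, (L <= j)%nat -> d j = 0%Z) /\
  N = sumZ (fun j => (d j * T a b j)%Z) L.

Definition delta (a b : Z) (beta : R) (N : Z) (L : nat) (d : nat -> Z) : R * R :=
  (IZR N / beta - IZR (sumZ (fun i => (d (i + 1)%nat * T a b i)%Z) L),
   IZR N / (beta * beta) - IZR (sumZ (fun i => (d (i + 2)%nat * T a b i)%Z) L)).

Definition Eset (a b : Z) (beta : R) (v : R * R) : Prop :=
  forall eps, eps > 0 ->
    exists N L d, (1 <= N)%Z /\ Trep a b N L d /\
      Rabs (fst v - fst (delta a b beta N L d)) < eps /\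
      Rabs (snd v - snd (delta a b beta N L d)) < eps.

Definition Rauzy (a b : Z) (alpha : Cx) (z : Cx) : Prop :=
  exists d : nat -> Z, admissible a b 2 d /\
    let S := fun n => sumC (fun i => Cmul (CofR (IZR (d (i + 2)%nat)))
                                          (Cpow alpha (i + 2))) n in
    Un_cv (fun n => fst (S n)) (fst z) /\ Un_cv (fun n => snd (S n)) (snd z).

Definition real_linear_bij (f : R * R -> Cx) : Prop :=
  (forall u v, f (fst u + fst v, snd u + snd v) = Cadd (f u) (f v)) /\
  (forall (c : R) u, f (c * fst u, c * snd u) = (c * fst (f u), c * snd (f u))) /\
  (forall u v, f u = f v -> u = v) /\
  (forall z, exists u, f u = z).

(* Main.v *)
Require Import Defs.
From Stdlib Require Import Reals ZArith Lra Lia Psatz Classical ClassicalEpsilon.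
Open Scope R_scope.

Lemma alpha_facts (a b : Z) (beta x y : R)
  (hbeta : beta ^ 3 = IZR a * beta ^ 2 + IZR b * beta + 1)
  (halpha : Cpow (x,y) 3 =
            Cadd (Cadd (Cmul (CofR (IZR a)) (Cpow (x,y) 2))
                       (Cmul (CofR (IZR b)) (x,y))) (CofR 1))
  (hy : y <> 0) :
  x*x+y*y <> 0 /\ IZR a = 2*x + /(x*x+y*y) /\ IZR b = -(x*x+y*y) - 2*x/(x*x+y*y)
  /\ beta = /(x*x+y*y).
Proof.
  assert (H1 := f_equal fst halpha). assert (H2 := f_equal snd halpha).
  simpl in H1, H2.
  set (A := IZR a) in *. set (B := IZR b) in *.
  assert (hp : x*x+y*y > 0) by nra.
  assert (E2 : y * (3*x*x - y*y - 2*A*x - B) = 0) by nra.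
  apply Rmult_integral in E2. destruct E2 as [E2|E2]; [contradiction|].
  assert (HB : B = 3*x*x - y*y - 2*A*x) by lra.
  assert (E1 : (x*x+y*y)*(2*x - A) + 1 = 0) by (rewrite HB in H1; nra).
  assert (HA : A = 2*x + /(x*x+y*y)).
  { apply (Rmult_eq_reg_l (x*x+y*y)); [|lra]. field_simplify; [|lra]. lra. }
  split; [lra|]. split; [exact HA|]. split.
  { rewrite HB, HA. field. lra. }
  assert (HB' : B = -(x*x+y*y) - 2*x/(x*x+y*y)) by (rewrite HB, HA; field; lra).
  rewrite HA, HB' in hbeta.
  assert (G : (x*x+y*y)*(beta^3 - (2*x + /(x*x+y*y))*beta^2
      - (-(x*x+y*y) - 2*x/(x*x+y*y))*beta - 1) = 0) by (rewrite hbeta; ring).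
  assert (F : (beta - /(x*x+y*y)) * ((beta - x)*(beta-x) + y*y) = 0).
  { rewrite <- (Rmult_0_r (/(x*x+y*y))), <- G. field. lra. }
  apply Rmult_integral in F. destruct F as [F|F]; [lra|]. exfalso. assert (0 < y*y) by (apply (Rsqr_pos_lt y hy)). assert (0 <= (beta-x)*(beta-x)) by apply Rle_0_sqr. lra.
Qed.
Lemma Ttrip_S a b n : Ttrip a b (S n) =
  (let '(_, y, _) := Ttrip a b n in y, let '(_, _, z) := Ttrip a b n in z,
   let '(x, y, z) := Ttrip a b n in (a * z + b * y + x)%Z).
Proof. simpl. destruct (Ttrip a b n) as [[p q] r]. reflexivity. Qed.

Lemma T_rec a b n : T a b (S (S (S n))) =
  (a * T a b (S (S n)) + b * T a b (S n) + T a b n)%Z.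
Proof.
  unfold T. rewrite !Ttrip_S. destruct (Ttrip a b n) as [[p q] r]. reflexivity.
Qed.

Lemma T0 a b : T a b 0 = 1%Z. Proof. reflexivity. Qed.
Lemma T1 a b : T a b 1 = a. Proof. reflexivity. Qed.
Lemma T2 a b : T a b 2 = (a*a+b)%Z. Proof. reflexivity. Qed.

Definition Tm1 a b n : Z := match n with O => 0%Z | S m => T a b m end.
Definition Tm2 a b n : Z := match n with O => 0%Z | S O => 0%Z | S (S m) => T a b m end.

Lemma Tm1_rec a b n : Tm1 a b (S (S (S n))) =
  (a * Tm1 a b (S (S n)) + b * Tm1 a b (S n) + Tm1 a b n)%Z.
Proof. destruct n; simpl Tm1. rewrite T2, T1, T0; ring. apply T_rec. Qed.

Lemma Tm2_rec a b n : Tm2 a b (S (S (S n))) =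
  (a * Tm2 a b (S (S n)) + b * Tm2 a b (S n) + Tm2 a b n)%Z.
Proof. destruct n as [|[|n]]; simpl Tm2. rewrite T1, T0; ring.
  rewrite T2, T1, T0; ring. apply T_rec. Qed.

Lemma T_pos a b (hb1 : (- a + 1 <= b)%Z) (hb2 : (b <= -2)%Z) n :
  (1 <= T a b n <= T a b (S n) /\ T a b (S n) <= T a b (S (S n)))%Z.
Proof.
  induction n.
  - rewrite T0, T1, T2. nia.
  - rewrite T_rec. nia.
Qed.

Definition fmap (B x y : R) (u : R*R) : Cx :=
  (- fst u - B * fst u * x - snd u * x, - B * fst u * y - snd u * y).
Definition gmap (B x y : R) (w : Cx) : R*R :=
  ((- fst w * y + snd w * x) / y, ((-1 - B*x) * snd w + B*y*fst w) / y).
Definition vv a b (beta : R) j : R*R :=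
  (IZR (T a b j) / beta - IZR (Tm1 a b j), IZR (T a b j) / (beta*beta) - IZR (Tm2 a b j)).

Lemma Cpow_S z n : Cpow z (S n) = Cmul z (Cpow z n). Proof. reflexivity. Qed.

Lemma Cmul_assoc z w u : Cmul z (Cmul w u) = Cmul (Cmul z w) u.
Proof. destruct z, w, u; unfold Cmul; simpl; f_equal; ring. Qed.

Lemma Cpow_add z m n : Cpow z (m + n) = Cmul (Cpow z m) (Cpow z n).
Proof.
  induction m; simpl.
  - destruct (Cpow z n); unfold Cmul; simpl; f_equal; ring.
  - rewrite IHm. apply Cmul_assoc.
Qed.

Lemma pow_rec (A B x y : R)
  (halpha : Cpow (x,y) 3 =
            Cadd (Cadd (Cmul (CofR A) (Cpow (x,y) 2))
                       (Cmul (CofR B) (x,y))) (CofR 1)) n :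
  fst (Cpow (x,y) (S (S (S n)))) = A * fst (Cpow (x,y) (S (S n))) + B * fst (Cpow (x,y) (S n)) + fst (Cpow (x,y) n) /\ snd (Cpow (x,y) (S (S (S n)))) = A * snd (Cpow (x,y) (S (S n))) + B * snd (Cpow (x,y) (S n)) + snd (Cpow (x,y) n).
Proof.
  change (S (S (S n))) with (3 + n)%nat. change (S (S n)) with (2 + n)%nat.
  change (S n) with (1 + n)%nat.
  rewrite !Cpow_add, halpha. simpl Cpow.
  destruct (Cpow (x,y) n) as [p q]. unfold Cmul, Cadd, CofR; simpl. split; ring.
Qed.

Lemma IZR_T_rec a b n : IZR (T a b (S (S (S n)))) =
  IZR a * IZR (T a b (S (S n))) + IZR b * IZR (T a b (S n)) + IZR (T a b n).
Proof. rewrite T_rec, !plus_IZR, !mult_IZR. ring. Qed.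
Lemma IZR_Tm1_rec a b n : IZR (Tm1 a b (S (S (S n)))) =
  IZR a * IZR (Tm1 a b (S (S n))) + IZR b * IZR (Tm1 a b (S n)) + IZR (Tm1 a b n).
Proof. rewrite Tm1_rec, !plus_IZR, !mult_IZR. ring. Qed.
Lemma IZR_Tm2_rec a b n : IZR (Tm2 a b (S (S (S n)))) =
  IZR a * IZR (Tm2 a b (S (S n))) + IZR b * IZR (Tm2 a b (S n)) + IZR (Tm2 a b n).
Proof. rewrite Tm2_rec, !plus_IZR, !mult_IZR. ring. Qed.

Lemma key (a b : Z) (beta x y : R) (hy : y <> 0)
  (hp : x*x+y*y <> 0)
  (HA : IZR a = 2*x + /(x*x+y*y))
  (HB : IZR b = -(x*x+y*y) - 2*x/(x*x+y*y))
  (Hbeta : beta = /(x*x+y*y))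
  (halpha : Cpow (x,y) 3 =
            Cadd (Cadd (Cmul (CofR (IZR a)) (Cpow (x,y) 2))
                       (Cmul (CofR (IZR b)) (x,y))) (CofR 1)) j :
  fst (Cpow (x,y) (S (S j))) = fst (fmap (IZR b) x y (vv a b beta j)) /\
  snd (Cpow (x,y) (S (S j))) = snd (fmap (IZR b) x y (vv a b beta j)).
Proof.
  assert (hb0 : beta <> 0) by (rewrite Hbeta; apply Rinv_neq_0_compat; exact hp).
  assert (G : forall j,
    (fst (Cpow (x,y) (S (S j))) = fst (fmap (IZR b) x y (vv a b beta j)) /\
     snd (Cpow (x,y) (S (S j))) = snd (fmap (IZR b) x y (vv a b beta j))) /\
    (fst (Cpow (x,y) (S (S (S j)))) = fst (fmap (IZR b) x y (vv a b beta (S j))) /\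
     snd (Cpow (x,y) (S (S (S j)))) = snd (fmap (IZR b) x y (vv a b beta (S j)))) /\
    (fst (Cpow (x,y) (S (S (S (S j))))) = fst (fmap (IZR b) x y (vv a b beta (S (S j)))) /\
     snd (Cpow (x,y) (S (S (S (S j))))) = snd (fmap (IZR b) x y (vv a b beta (S (S j)))))).
  { induction j0.
    - unfold fmap, vv; simpl Tm1; simpl Tm2. rewrite T0, T1, T2, plus_IZR, mult_IZR.
      simpl. rewrite HB, HA, Hbeta.
      repeat split; field; auto.
    - destruct IHj0 as [K0 [K1 K2]]. split; [exact K1|]. split; [exact K2|].
      destruct (pow_rec _ _ _ _ halpha (S (S j0))) as [P1 P2].
      destruct K0 as [K0a K0b]; destruct K1 as [K1a K1b]; destruct K2 as [K2a K2b].
      rewrite P1, P2, K0a, K0b, K1a, K1b, K2a, K2b.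
      unfold fmap, vv; cbn [fst snd].
      rewrite (IZR_T_rec a b j0), (IZR_Tm1_rec a b j0), (IZR_Tm2_rec a b j0).
      split; field; auto. }
  apply G.
Qed.

Definition Fsum (al : Cx) (d : nat -> Z) n :=
  sumC (fun i => Cmul (CofR (IZR (d i))) (Cpow al (i + 2))) n.

Lemma sumZ_shift1 a b g L :
  sumZ (fun i => (g (i + 1)%nat * T a b i)%Z) L = sumZ (fun j => (g j * Tm1 a b j)%Z) (S L).
Proof.
  induction L; simpl. ring. simpl in IHL. rewrite IHL, Nat.add_1_r. reflexivity.
Qed.

Lemma sumZ_shift2 a b g L :
  sumZ (fun i => (g (i + 2)%nat * T a b i)%Z) L = sumZ (fun j => (g j * Tm2 a b j)%Z) (S (S L)).
Proof.
  induction L; simpl. ring. simpl in IHL. rewrite IHL.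
  replace (L + 2)%nat with (S (S L)) by lia. reflexivity.
Qed.

Lemma lin_sum (a b : Z) (beta x y : R) (hy : y <> 0)
  (hp : x*x+y*y <> 0)
  (HA : IZR a = 2*x + /(x*x+y*y))
  (HB : IZR b = -(x*x+y*y) - 2*x/(x*x+y*y))
  (Hbeta : beta = /(x*x+y*y))
  (halpha : Cpow (x,y) 3 =
            Cadd (Cadd (Cmul (CofR (IZR a)) (Cpow (x,y) 2))
                       (Cmul (CofR (IZR b)) (x,y))) (CofR 1)) d L :
  fmap (IZR b) x y
    (IZR (sumZ (fun j => (d j * T a b j)%Z) L) / beta - IZR (sumZ (fun j => (d j * Tm1 a b j)%Z) L),
     IZR (sumZ (fun j => (d j * T a b j)%Z) L) / (beta*beta) - IZR (sumZ (fun j => (d j * Tm2 a b j)%Z) L))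
  = Fsum (x,y) d L.
Proof.
  assert (hb0 : beta <> 0) by (rewrite Hbeta; apply Rinv_neq_0_compat; exact hp).
  induction L.
  - unfold fmap, Fsum; simpl. f_equal; field; auto.
  - unfold Fsum in *. simpl sumZ. simpl sumC. rewrite <- IHL.
    destruct (key a b beta x y hy hp HA HB Hbeta halpha L) as [K1 K2].
    replace (L + 2)%nat with (S (S L)) by lia.
    unfold Cadd, Cmul, CofR. cbn [fst snd]. rewrite K1, K2.
    unfold fmap, vv. cbn [fst snd]. rewrite !plus_IZR, !mult_IZR.
    f_equal; field; auto.
Qed.

Lemma delta_eq (a b : Z) (beta x y : R) (hy : y <> 0)
  (hp : x*x+y*y <> 0)
  (HA : IZR a = 2*x + /(x*x+y*y))
  (HB : IZR b = -(x*x+y*y) - 2*x/(x*x+y*y))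
  (Hbeta : beta = /(x*x+y*y))
  (halpha : Cpow (x,y) 3 =
            Cadd (Cadd (Cmul (CofR (IZR a)) (Cpow (x,y) 2))
                       (Cmul (CofR (IZR b)) (x,y))) (CofR 1)) d L
  (hz : forall j, (L <= j)%nat -> d j = 0%Z) :
  fmap (IZR b) x y (delta a b beta (sumZ (fun j => (d j * T a b j)%Z) L) L d) = Fsum (x,y) d L.
Proof.
  rewrite <- (lin_sum a b beta x y hy hp HA HB Hbeta halpha d L).
  unfold delta. rewrite sumZ_shift1, sumZ_shift2. simpl sumZ.
  rewrite (hz L), (hz (S L)) by lia. rewrite !Z.mul_0_l, !Z.add_0_r. reflexivity.
Qed.

Lemma gf (B x y : R) (hy : y <> 0) u : gmap B x y (fmap B x y u) = u.
Proof. destruct u as [u1 u2]. unfold gmap, fmap; simpl. f_equal; field; auto. Qed.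
Lemma fg (B x y : R) (hy : y <> 0) w : fmap B x y (gmap B x y w) = w.
Proof. destruct w as [u1 u2]. unfold gmap, fmap; simpl. f_equal; field; auto. Qed.

Lemma fmap_bij (B x y : R) (hy : y <> 0) : real_linear_bij (fmap B x y).
Proof.
  split; [|split; [|split]].
  - intros [u1 u2] [v1 v2]. unfold fmap, Cadd; simpl. f_equal; ring.
  - intros c [u1 u2]. unfold fmap; simpl. f_equal; ring.
  - intros u v H. rewrite <- (gf B x y hy u), <- (gf B x y hy v), H. reflexivity.
  - intros z. exists (gmap B x y z). apply fg; auto.
Qed.

Lemma abs_lin (c1 c2 u v : R) : Rabs (c1 * u + c2 * v) <= (Rabs c1 + Rabs c2) * (Rabs u + Rabs v).
Proof.
  eapply Rle_trans; [apply Rabs_triang|]. rewrite !Rabs_mult.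
  assert (0 <= Rabs c1) by apply Rabs_pos. assert (0 <= Rabs c2) by apply Rabs_pos.
  assert (0 <= Rabs u) by apply Rabs_pos. assert (0 <= Rabs v) by apply Rabs_pos. nra.
Qed.

Definition Cg (B x y : R) := Rabs (-1) + Rabs (x/y) + Rabs (-(1+B*x)/y) + Rabs B.
Definition Cf (B x y : R) := Rabs (-1 - B*x) + Rabs (-x) + Rabs (-B*y) + Rabs (-y).

Lemma Cg_pos B x y : 0 <= Cg B x y.
Proof. unfold Cg. pose proof (Rabs_pos (-1)). pose proof (Rabs_pos (x/y)).
  pose proof (Rabs_pos (-(1+B*x)/y)). pose proof (Rabs_pos B). lra. Qed.
Lemma Cf_pos B x y : 0 <= Cf B x y.
Proof. unfold Cf. pose proof (Rabs_pos (-1 - B*x)). pose proof (Rabs_pos (-x)).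
  pose proof (Rabs_pos (-B*y)). pose proof (Rabs_pos (-y)). lra. Qed.

Lemma g_bound (B x y : R) (hy : y <> 0) w w' :
  Rabs (fst (gmap B x y w) - fst (gmap B x y w')) <= Cg B x y * (Rabs (fst w - fst w') + Rabs (snd w - snd w')) /\
  Rabs (snd (gmap B x y w) - snd (gmap B x y w')) <= Cg B x y * (Rabs (fst w - fst w') + Rabs (snd w - snd w')).
Proof.
  assert (0 <= Rabs (fst w - fst w') + Rabs (snd w - snd w')) by
    (pose proof (Rabs_pos (fst w - fst w')); pose proof (Rabs_pos (snd w - snd w')); lra).
  unfold Cg. pose proof (Rabs_pos (-1)). pose proof (Rabs_pos (x/y)).
  pose proof (Rabs_pos (-(1+B*x)/y)). pose proof (Rabs_pos B).
  split.
  - replace (fst (gmap B x y w) - fst (gmap B x y w')) with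
      ((-1) * (fst w - fst w') + (x/y) * (snd w - snd w')) by (unfold gmap; simpl; field; auto).
    eapply Rle_trans; [apply abs_lin|]. nra.
  - replace (snd (gmap B x y w) - snd (gmap B x y w')) with
      ((-(1+B*x)/y) * (snd w - snd w') + B * (fst w - fst w')) by (unfold gmap; simpl; field; auto).
    eapply Rle_trans; [apply abs_lin|]. nra.
Qed.

Lemma f_bound (B x y : R) u u' :
  Rabs (fst (fmap B x y u) - fst (fmap B x y u')) <= Cf B x y * (Rabs (fst u - fst u') + Rabs (snd u - snd u')) /\
  Rabs (snd (fmap B x y u) - snd (fmap B x y u')) <= Cf B x y * (Rabs (fst u - fst u') + Rabs (snd u - snd u')).
Proof.
  assert (0 <= Rabs (fst u - fst u') + Rabs (snd u - snd u')) by
    (pose proof (Rabs_pos (fst u - fst u')); pose proof (Rabs_pos (snd u - snd u')); lra).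
  unfold Cf. pose proof (Rabs_pos (-1 - B*x)). pose proof (Rabs_pos (-x)).
  pose proof (Rabs_pos (-B*y)). pose proof (Rabs_pos (-y)).
  split.
  - replace (fst (fmap B x y u) - fst (fmap B x y u')) with
      ((-1 - B*x) * (fst u - fst u') + (-x) * (snd u - snd u')) by (unfold fmap; simpl; ring).
    eapply Rle_trans; [apply abs_lin|]. nra.
  - replace (snd (fmap B x y u) - snd (fmap B x y u')) with
      ((-B*y) * (fst u - fst u') + (-y) * (snd u - snd u')) by (unfold fmap; simpl; ring).
    eapply Rle_trans; [apply abs_lin|]. nra.
Qed.

Lemma lattice (b : Z) (x y : R) z :
  (exists m n : Z, z = fmap (IZR b) x y (IZR m, IZR n)) <->
  (exists p q : Z, z = Cadd (CofR (IZR p)) (Cmul (CofR (IZR q)) (x,y))).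
Proof.
  split.
  - intros [m [n ->]]. exists (- m)%Z, (- b * m - n)%Z.
    unfold fmap, Cadd, Cmul, CofR; simpl. rewrite !minus_IZR, !opp_IZR, !mult_IZR, !opp_IZR.
    f_equal; ring.
  - intros [p [q ->]]. exists (- p)%Z, (- q + b * p)%Z.
    unfold fmap, Cadd, Cmul, CofR; simpl. rewrite !plus_IZR, !opp_IZR, !mult_IZR.
    f_equal; ring.
Qed.

Lemma lex_le_ext u u' w n : (forall i, (i < n)%nat -> u i = u' i) -> lex_le u w n -> lex_le u' w n.
Proof.
  intros E [H|[i [Hi [Hl Hlt]]]].
  - left. intros i Hi. rewrite <- E by auto. auto.
  - right. exists i. split; auto. split.
    + intros l Hl'. rewrite <- E by lia. auto.
    + rewrite <- E by auto. auto.
Qed.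

Lemma adm_shift2 a b D : admissible a b 2 D <-> admissible a b 0 (fun j => D (j + 2)%nat).
Proof.
  split.
  - intros [H1 H2]. split.
    + intros j _. apply H1. lia.
    + intros j k Hjk. apply (lex_le_ext (fun i => D ((j+2) - i)%nat)).
      * intros i Hi. f_equal. lia.
      * apply H2. lia.
  - intros [H1 H2]. split.
    + intros j Hj. replace j with ((j - 2) + 2)%nat by lia. apply H1. lia.
    + intros j k Hjk. apply (lex_le_ext (fun i => D ((j - 2 - i) + 2)%nat)).
      * intros i Hi. f_equal. lia.
      * apply (H2 (j-2)%nat k). lia.
Qed.

Lemma adm_mod a b (ha : (3 <= a)%Z) e e' n :
  admissible a b 0 e -> (forall j, (n <= j)%nat -> (0 <= e' j <= a - 2)%Z) ->
  (forall j, (j < n)%nat -> e' j = e j) -> admissible a b 0 e'.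
Proof.
  intros [H1 H2] Hn Hlt. split.
  - intros j _. destruct (Nat.lt_ge_cases j n).
    + rewrite Hlt by auto. apply H1; lia.
    + specialize (Hn j H). lia.
  - intros j k Hjk. destruct (Nat.lt_ge_cases j n).
    + apply (lex_le_ext (fun i => e (j - i)%nat)).
      * intros i Hi. rewrite Hlt by lia. reflexivity.
      * apply H2. lia.
    + right. exists 0%nat. split; [lia|]. split; [intros; lia|].
      rewrite Nat.sub_0_r. specialize (Hn j H). simpl. lia.
Qed.

Definition upd (c : nat -> Z) n t := fun j => if Nat.eqb j n then t else c j.

Definition Apx a b (al z : Cx) (c : nat -> Z) n : Prop :=
  forall eps, eps > 0 -> exists d L, admissible a b 0 d /\ (forall j, (L <= j)%nat -> d j = 0%Z) /\
    (forall j, (j < n)%nat -> d j = c j) /\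
    Rabs (fst z - fst (Fsum al d L)) < eps /\ Rabs (snd z - snd (Fsum al d L)) < eps.

Lemma Apx_ext a b al z c c' n : (forall j, (j < n)%nat -> c j = c' j) -> Apx a b al z c n -> Apx a b al z c' n.
Proof.
  intros E H eps He. destruct (H eps He) as [d [L [A1 [A2 [A3 A4]]]]].
  exists d, L. split; [exact A1|]. split; [exact A2|]. split; [|exact A4].
  intros k Hk. rewrite A3, E; auto.
Qed.

Lemma Apx_step a b al z c n (ha : (0 <= a)%Z) : Apx a b al z c n ->
  exists t, (0 <= t <= a-1)%Z /\ Apx a b al z (upd c n t) (S n).
Proof.
  intros H. destruct (classic (exists t, (0 <= t <= a-1)%Z /\ Apx a b al z (upd c n t) (S n)))
    as [G|Hno]; [exact G|]. exfalso.
  assert (Hm : forall m : nat, exists eps, eps > 0 /\ forall t, (0 <= t < Z.of_nat m)%Z -> (t <= a-1)%Z ->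
    forall d L, admissible a b 0 d -> (forall j, (L<=j)%nat -> d j = 0%Z) ->
    (forall j, (j < S n)%nat -> d j = upd c n t j) ->
    Rabs (fst z - fst (Fsum al d L)) < eps -> Rabs (snd z - snd (Fsum al d L)) < eps -> False).
  { induction m.
    - exists 1. split; [lra|]. intros t Ht. simpl in Ht. lia.
    - destruct IHm as [e1 [He1 F1]].
      destruct (Z_le_gt_dec (Z.of_nat m) (a-1)) as [Hle|Hgt].
      + assert (Hn2 : ~ Apx a b al z (upd c n (Z.of_nat m)) (S n)).
        { intro HA. apply Hno. exists (Z.of_nat m). split; [lia|exact HA]. }
        unfold Apx in Hn2. apply not_all_ex_not in Hn2 as [e2 Hn2].
        apply imply_to_and in Hn2 as [He2 Hn2].
        exists (Rmin e1 e2). split; [apply Rmin_glb_lt; lra|].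
        intros t Ht Ht2 d L A1 A2 A3 A4 A5.
        destruct (Z.eq_dec t (Z.of_nat m)) as [->|Hne].
        * apply Hn2. exists d, L. split; [exact A1|]. split; [exact A2|]. split; [exact A3|].
          pose proof (Rmin_r e1 e2). split; lra.
        * apply (F1 t) with d L; auto; [lia| | ]; pose proof (Rmin_l e1 e2); lra.
      + exists e1. split; [exact He1|]. intros t Ht Ht2. apply F1; lia. }
  destruct (Hm (Z.to_nat a)) as [eps [He F]].
  destruct (H eps He) as [d [L [A1 [A2 [A3 [A4 A5]]]]]].
  apply (F (d n) ) with d L; auto.
  - destruct A1 as [D1 _]. specialize (D1 n). rewrite Z2Nat.id by lia. lia.
  - destruct A1 as [D1 _]. specialize (D1 n). lia.
  - intros j Hj. unfold upd. destruct (Nat.eqb_spec j n).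
    + subst; reflexivity.
    + apply A3. lia.
Qed.

Definition pick a b al z (c : nat -> Z) n : Z :=
  epsilon (inhabits 0%Z) (fun t => (0 <= t <= a-1)%Z /\ Apx a b al z (upd c n t) (S n)).

Fixpoint seqc a b al z n : nat -> Z :=
  match n with
  | O => fun _ => 0%Z
  | S m => upd (seqc a b al z m) m (pick a b al z (seqc a b al z m) m)
  end.

Lemma seqc_Apx a b al z (ha : (0 <= a)%Z) : Apx a b al z (fun _ => 0%Z) 0 ->
  forall n, Apx a b al z (seqc a b al z n) n.
Proof.
  intros H0 n. induction n; [exact H0|].
  simpl. destruct (Apx_step a b al z _ n ha IHn) as [t Ht].
  pose proof (epsilon_spec (inhabits 0%Z)
    (fun t => (0 <= t <= a-1)%Z /\ Apx a b al z (upd (seqc a b al z n) n t) (S n))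
    (ex_intro _ t Ht)) as E.
  exact (proj2 E).
Qed.

Lemma seqc_stable a b al z j n : (j < n)%nat -> seqc a b al z n j = seqc a b al z (S j) j.
Proof.
  induction n; intros H; [lia|].
  destruct (Nat.eq_dec j n) as [->|Hne]; [reflexivity|].
  simpl seqc at 1. unfold upd at 1. rewrite (proj2 (Nat.eqb_neq j n) Hne). apply IHn. lia.
Qed.

Lemma build a b al z (ha : (0 <= a)%Z) : Apx a b al z (fun _ => 0%Z) 0 ->
  forall n, Apx a b al z (fun j => seqc a b al z (S j) j) n.
Proof.
  intros H0 n. apply (Apx_ext a b al z (seqc a b al z n)).
  - intros j Hj. apply seqc_stable; auto.
  - apply seqc_Apx; auto.
Qed.

Lemma Apx_adm a b al z e : (forall n, Apx a b al z e n) -> admissible a b 0 e.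
Proof.
  intros H. split.
  - intros j _. destruct (H (S j) 1 Rlt_0_1) as [d [L [[D1 _] [_ [A3 _]]]]].
    rewrite <- A3 by lia. apply D1. lia.
  - intros j k Hjk. destruct (H (S j) 1 Rlt_0_1) as [d [L [[_ D2] [_ [A3 _]]]]].
    apply (lex_le_ext (fun i => d (j - i)%nat)).
    + intros i Hi. apply A3. lia.
    + apply D2. lia.
Qed.

Lemma Cnorm2_pow z k : Cnorm2 (Cpow z k) = (Cnorm2 z) ^ k.
Proof.
  induction k; simpl. unfold Cnorm2; simpl; ring.
  rewrite <- IHk. destruct z, (Cpow (r, r0) k). unfold Cnorm2, Cmul; simpl; ring.
Qed.

Lemma pow_bound z r k : 0 <= r -> Cnorm2 z = r * r ->
  Rabs (fst (Cpow z k)) <= r ^ k /\ Rabs (snd (Cpow z k)) <= r ^ k.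
Proof.
  intros Hr Hz. pose proof (Cnorm2_pow z k) as N. rewrite Hz in N.
  replace ((r*r)^k) with (r^k * r^k) in N by (rewrite <- Rpow_mult_distr; ring).
  assert (0 <= r^k) by (apply pow_le; auto).
  unfold Cnorm2 in N. destruct (Cpow z k) as [u v]; simpl in *.
  split; apply Rabs_le; split; nra.
Qed.

Lemma Fsum_ext al d d' n : (forall j, (j < n)%nat -> d j = d' j) -> Fsum al d n = Fsum al d' n.
Proof.
  induction n; intros H; [reflexivity|]. unfold Fsum in *; simpl.
  rewrite IHn by (intros; apply H; lia). rewrite H by lia. reflexivity.
Qed.

Lemma Fsum_zero al d L m : (forall j, (L <= j)%nat -> d j = 0%Z) -> Fsum al d (L + m) = Fsum al d L.
Proof.
  intros H. induction m. rewrite Nat.add_0_r; reflexivity.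
  rewrite Nat.add_succ_r. unfold Fsum in *; simpl. rewrite IHm, H by lia.
  destruct (sumC _ L). unfold Cadd, Cmul, CofR; simpl. f_equal; ring.
Qed.

Lemma Fsum_tail (a : Z) al r d n m (hr0 : 0 <= r) (hr1 : r < 1) (hal : Cnorm2 al = r * r)
  (hd : forall j, (0 <= d j <= a - 1)%Z) :
  Rabs (fst (Fsum al d (n + m)) - fst (Fsum al d n)) <= (IZR a - 1) * (r^n - r^(n+m)) / (1 - r) /\
  Rabs (snd (Fsum al d (n + m)) - snd (Fsum al d n)) <= (IZR a - 1) * (r^n - r^(n+m)) / (1 - r).
Proof.
  induction m.
  - rewrite Nat.add_0_r. unfold Rminus. rewrite !Rplus_opp_r, Rabs_R0.
    replace ((IZR a + - 1) * 0 / (1 + - r)) with 0 by (field; lra). lra.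
  - rewrite Nat.add_succ_r. unfold Fsum in *; simpl sumC.
    destruct IHm as [I1 I2].
    pose proof (pow_bound al r (n + m + 2) hr0 hal) as [P1 P2].
    assert (Hdj : 0 <= IZR (d (n+m)%nat) <= IZR a - 1).
    { specialize (hd (n+m)%nat). split; [apply IZR_le; lia|].
      rewrite <- minus_IZR. apply IZR_le; lia. }
    assert (Hp : r ^ (n + m + 2) <= r ^ (n+m)).
    { rewrite pow_add. assert (0 <= r^(n+m)) by (apply pow_le; auto). simpl. assert (r*(r*1) <= 1) by nra. nra. }
    assert (Hs : r ^ S (n + m) = r * r ^ (n+m)) by reflexivity.
    assert (Hk : (IZR a - 1) * (r ^ n - r ^ (n + m)) / (1 - r) + (IZR a - 1) * r^(n+m)
                 = (IZR a - 1) * (r ^ n - r ^ S (n + m)) / (1 - r)) by (rewrite Hs; field; lra).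
    set (S0 := sumC (fun i : nat => Cmul (CofR (IZR (d i))) (Cpow al (i + 2))) (n + m)) in *.
    set (S1 := sumC (fun i : nat => Cmul (CofR (IZR (d i))) (Cpow al (i + 2))) n) in *.
    set (w := Cpow al (n + m + 2)) in *.
    unfold Cadd, Cmul, CofR; simpl.
    assert (0 <= r^(n+m)) by (apply pow_le; auto).
    split.
    + replace (fst S0 + (IZR (d (n + m)%nat) * fst w - 0 * snd w) - fst S1)
        with ((fst S0 - fst S1) + IZR (d (n + m)%nat) * fst w) by ring.
      eapply Rle_trans; [apply Rabs_triang|]. rewrite Rabs_mult, (Rabs_right (IZR _)) by lra.
      assert (IZR (d (n + m)%nat) * Rabs (fst w) <= (IZR a - 1) * r^(n+m)).
      { pose proof (Rabs_pos (fst w)). apply Rle_trans with (IZR (d (n + m)%nat) * r^(n+m)); nra. }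
      rewrite <- Hs. lra.
    + replace (snd S0 + (IZR (d (n + m)%nat) * snd w + 0 * fst w) - snd S1)
        with ((snd S0 - snd S1) + IZR (d (n + m)%nat) * snd w) by ring.
      eapply Rle_trans; [apply Rabs_triang|]. rewrite Rabs_mult, (Rabs_right (IZR _)) by lra.
      assert (IZR (d (n + m)%nat) * Rabs (snd w) <= (IZR a - 1) * r^(n+m)).
      { pose proof (Rabs_pos (snd w)). apply Rle_trans with (IZR (d (n + m)%nat) * r^(n+m)); nra. }
      rewrite <- Hs. lra.
Qed.

Lemma Fsum_L al d L n : (forall j, (L <= j)%nat -> d j = 0%Z) -> Fsum al d L = Fsum al d (n + (L - n)).
Proof.
  intros H. destruct (Nat.le_gt_cases L n).
  - replace (n + (L - n))%nat with (L + (n - L))%nat by lia. rewrite Fsum_zero; auto.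
  - f_equal. lia.
Qed.

Lemma Apx_conv a b al z e r (ha : (1 <= a)%Z) (hr0 : 0 <= r) (hr1 : r < 1) (hal : Cnorm2 al = r * r) :
  (forall n, Apx a b al z e n) ->
  Un_cv (fun n => fst (Fsum al e n)) (fst z) /\ Un_cv (fun n => snd (Fsum al e n)) (snd z).
Proof.
  intros H.
  assert (HK : 0 <= IZR a - 1) by (rewrite <- minus_IZR; apply IZR_le; lia).
  assert (main : forall eps, eps > 0 -> exists N, forall n, (n >= N)%nat ->
     Rabs (fst (Fsum al e n) - fst z) < eps /\ Rabs (snd (Fsum al e n) - snd z) < eps).
  { intros eps He.
    assert (Hr : Rabs r < 1) by (rewrite Rabs_right; lra).
    destruct (pow_lt_1_zero r Hr (eps * (1 - r) / (2 * (IZR a - 1 + 1)))) as [N HN].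
    { apply Rdiv_lt_0_compat; nra. }
    exists N. intros n Hn.
    destruct (H n (eps/2) ltac:(lra)) as [d [L [A1 [A2 [A3 [A4 A5]]]]]].
    assert (Hd : forall j, (0 <= d j <= a - 1)%Z) by (intro j; apply (proj1 A1); lia).
    destruct (Fsum_tail a al r d n (L - n) hr0 hr1 hal Hd) as [T1 T2].
    rewrite <- Fsum_L in T1, T2 by auto.
    rewrite (Fsum_ext al d e n) in T1, T2 by auto.
    specialize (HN n Hn). rewrite Rabs_right in HN by (apply Rle_ge, pow_le; auto).
    assert (0 <= r^(n + (L-n))) by (apply pow_le; auto).
    assert (B : (IZR a - 1) * (r ^ n - r ^ (n + (L - n))) / (1 - r) <= eps / 2).
    { apply Rle_trans with ((IZR a - 1) * r^n / (1-r)).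
      - unfold Rdiv. apply Rmult_le_compat_r. left; apply Rinv_0_lt_compat; lra. nra.
      - apply (Rmult_le_reg_r (1-r)); [lra|]. unfold Rdiv. rewrite Rmult_assoc, Rinv_l by lra.
        assert (HN' : r^n * (2 * (IZR a - 1 + 1)) < eps * (1 - r)).
        { apply (Rmult_lt_reg_r (/ (2 * (IZR a - 1 + 1)))). apply Rinv_0_lt_compat; lra.
          rewrite Rmult_assoc, Rinv_r by lra. lra. }
        nra. }
    split.
    - replace (fst (Fsum al e n) - fst z) with
        (-(fst (Fsum al d L) - fst (Fsum al e n)) - (fst z - fst (Fsum al d L))) by ring.
      eapply Rle_lt_trans; [apply Rabs_triang|]. rewrite !Rabs_Ropp. lra.
    - replace (snd (Fsum al e n) - snd z) with
        (-(snd (Fsum al d L) - snd (Fsum al e n)) - (snd z - snd (Fsum al d L))) by ring.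
      eapply Rle_lt_trans; [apply Rabs_triang|]. rewrite !Rabs_Ropp. lra. }
  split; intros eps He; destruct (main eps He) as [N HN]; exists N; intros n Hn;
    unfold R_dist; destruct (HN n Hn) as [U V]; assumption.
Qed.

Lemma adm_ext a b lo d d' : (forall j, d j = d' j) -> admissible a b lo d -> admissible a b lo d'.
Proof.
  intros E [H1 H2]. split.
  - intros j Hj. rewrite <- E. auto.
  - intros j k Hjk. apply (lex_le_ext (fun i => d (j - i)%nat)); [intros; apply E | auto].
Qed.

Lemma Un_cv_ext u v l : (forall n, u n = v n) -> Un_cv u l -> Un_cv v l.
Proof. intros E H eps He. destruct (H eps He) as [N HN]. exists N. intros n Hn. rewrite <- E. auto. Qed.

Lemma sumZ_nonneg g n : (forall j, (0 <= g j)%Z) -> (0 <= sumZ g n)%Z.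
Proof. intros H; induction n; simpl; [lia|]. specialize (H n). lia. Qed.

Lemma pow_decr r m n : 0 <= r <= 1 -> (m <= n)%nat -> r ^ n <= r ^ m.
Proof.
  intros Hr Hmn. replace n with (m + (n - m))%nat by lia. rewrite pow_add.
  assert (0 <= r^m) by (apply pow_le; lra).
  assert (r ^ (n - m) <= 1).
  { induction (n - m)%nat; simpl; [lra|]. assert (0 <= r^n0) by (apply pow_le; lra). nra. }
  nra.
Qed.

Theorem proposition3p3 (a b : Z) (beta : R) (alpha : Cx)
  (hb1 : (- a + 1 <= b)%Z) (hb2 : (b <= -2)%Z)
  (hbeta : beta ^ 3 = IZR a * beta ^ 2 + IZR b * beta + 1)
  (halpha : Cpow alpha 3 =
            Cadd (Cadd (Cmul (CofR (IZR a)) (Cpow alpha 2))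
                       (Cmul (CofR (IZR b)) alpha)) (CofR 1))
  (halpha_nonreal : snd alpha <> 0)
  (hdom : Cnorm2 alpha < beta * beta) :
  exists f : R * R -> Cx,
    real_linear_bij f /\
    (forall z, Rauzy a b alpha z <-> exists v, Eset a b beta v /\ f v = z) /\
    (forall z, (exists m n : Z, z = f (IZR m, IZR n)) <->
               (exists p q : Z, z = Cadd (CofR (IZR p)) (Cmul (CofR (IZR q)) alpha))).
Proof.
  destruct alpha as [x y]. simpl in halpha_nonreal. rename halpha_nonreal into hy.
  destruct (alpha_facts a b beta x y hbeta halpha hy) as [hp [HA [HB Hbeta]]].
  assert (ha3 : (3 <= a)%Z) by lia.
  assert (hp0 : 0 < x*x+y*y) by (pose proof (Rsqr_pos_lt y hy); unfold Rsqr in *; nra).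
  assert (hp1 : x*x+y*y < 1).
  { unfold Cnorm2 in hdom; simpl in hdom. rewrite Hbeta in hdom.
    set (p := x*x+y*y) in *.
    assert (p * p * p < 1).
    { apply (Rmult_lt_compat_l (p*p)) in hdom; [|nra].
      replace (p * p * (/p * /p)) with 1 in hdom by (field; lra). nra. }
    destruct (Rlt_or_le p 1); auto. nra. }
  set (r := sqrt (x*x+y*y)).
  assert (hr0 : 0 <= r) by apply sqrt_pos.
  assert (hrr : r * r = x*x+y*y) by (apply sqrt_sqrt; lra).
  assert (hr1 : r < 1) by nra.
  assert (hal : Cnorm2 (x,y) = r * r) by (rewrite hrr; reflexivity).
  exists (fmap (IZR b) x y). split; [apply fmap_bij; auto|]. split; [|apply lattice].
  intro z. split.
  -
    intros [D [HD [Hc1 Hc2]]]. exists (gmap (IZR b) x y z). split; [|apply fg; auto].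
    set (e := fun j => D (j + 2)%nat).
    assert (He : admissible a b 0 e) by (apply adm_shift2; auto).
    change (Un_cv (fun n => fst (Fsum (x,y) e n)) (fst z)) in Hc1.
    change (Un_cv (fun n => snd (Fsum (x,y) e n)) (snd z)) in Hc2.
    intros eps Heps.
    set (C := Cg (IZR b) x y). assert (HC : 0 <= C) by apply Cg_pos.
    set (dl := eps / (4 * C + 1)).
    assert (Hdl : dl > 0) by (apply Rdiv_lt_0_compat; lra).
    destruct (Hc1 dl Hdl) as [N1 HN1]. destruct (Hc2 dl Hdl) as [N2 HN2].
    assert (Hr : Rabs r < 1) by (rewrite Rabs_right; lra).
    destruct (pow_lt_1_zero r Hr dl Hdl) as [N3 HN3].
    set (n := (N1 + N2 + N3)%nat).
    set (e' := fun j => if (j <? n)%nat then e j else if (j =? n)%nat then 1%Z else 0%Z).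
    assert (He' : admissible a b 0 e').
    { apply (adm_mod a b ha3 e e' n He).
      - intros j Hj. unfold e'. destruct (Nat.ltb_spec j n); [lia|].
        destruct (j =? n)%nat; lia.
      - intros j Hj. unfold e'. destruct (Nat.ltb_spec j n); [reflexivity|lia]. }
    assert (Hfin : forall j, (S n <= j)%nat -> e' j = 0%Z).
    { intros j Hj. unfold e'. destruct (Nat.ltb_spec j n); [lia|].
      destruct (Nat.eqb_spec j n); [lia|reflexivity]. }
    assert (He'n : e' n = 1%Z).
    { unfold e'. rewrite Nat.ltb_irrefl, Nat.eqb_refl. reflexivity. }
    exists (sumZ (fun j => (e' j * T a b j)%Z) (S n)), (S n), e'.
    split.
    { simpl. rewrite He'n.
      assert (0 <= sumZ (fun j => (e' j * T a b j)%Z) n)%Z.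
      { apply sumZ_nonneg. intro j. destruct He' as [D1 _]. specialize (D1 j ltac:(lia)).
        pose proof (T_pos a b hb1 hb2 j). nia. }
      pose proof (T_pos a b hb1 hb2 n). lia. }
    split; [split; [exact He'|split; [exact Hfin|reflexivity]]|].
    rewrite <- (gf (IZR b) x y hy (delta _ _ _ _ _ _)).
    rewrite (delta_eq a b beta x y hy hp HA HB Hbeta halpha e' (S n) Hfin).
    destruct (g_bound (IZR b) x y hy z (Fsum (x, y) e' (S n))) as [G1 G2].
    fold C in G1, G2.
    assert (Hsplit : Fsum (x,y) e' (S n) =
       Cadd (Fsum (x,y) e n) (Cmul (CofR 1) (Cpow (x,y) (n + 2)))).
    { unfold Fsum at 1. simpl sumC. rewrite He'n.
      fold (Fsum (x,y) e' n). rewrite (Fsum_ext _ e' e).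
      - reflexivity.
      - intros j Hj. unfold e'. destruct (Nat.ltb_spec j n); [reflexivity|lia]. }
    rewrite Hsplit in G1, G2.
    pose proof (pow_bound (x,y) r (n+2) hr0 hal) as [P1 P2].
    assert (Hrn : r^(n+2) < dl).
    { assert (r^(n+2) <= r^N3).
      { apply pow_decr; [lra | unfold n; lia]. }
      specialize (HN3 N3 (le_n _)). rewrite Rabs_right in HN3 by (apply Rle_ge, pow_le; lra). lra. }
    set (F := Fsum (x,y) e n) in *. set (Q := Cpow (x,y) (n+2)) in *.
    unfold Cadd, Cmul, CofR in G1, G2; cbn [fst snd] in G1, G2.
    assert (HF1 := HN1 n ltac:(unfold n; lia)). assert (HF2 := HN2 n ltac:(unfold n; lia)).
    unfold R_dist in HF1, HF2. fold F in HF1, HF2.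
    assert (X1 : Rabs (fst z - (fst F + (1 * fst Q - 0 * snd Q))) < 2 * dl).
    { replace (fst z - (fst F + (1 * fst Q - 0 * snd Q))) with (-(fst F - fst z) - fst Q) by ring.
      eapply Rle_lt_trans; [apply Rabs_triang|]. rewrite !Rabs_Ropp. lra. }
    assert (X2 : Rabs (snd z - (snd F + (1 * snd Q + 0 * fst Q))) < 2 * dl).
    { replace (snd z - (snd F + (1 * snd Q + 0 * fst Q))) with (-(snd F - snd z) - snd Q) by ring.
      eapply Rle_lt_trans; [apply Rabs_triang|]. rewrite !Rabs_Ropp. lra. }
    assert (Hfin2 : C * (4 * dl) < eps).
    { unfold dl. apply (Rmult_lt_reg_r (4 * C + 1)); [lra|].
      replace (C * (4 * (eps / (4 * C + 1))) * (4 * C + 1)) with (4 * C * eps) by (field; lra). nra. }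
    assert (C * (Rabs (fst z - (fst F + (1 * fst Q - 0 * snd Q))) +
                 Rabs (snd z - (snd F + (1 * snd Q + 0 * fst Q)))) <= C * (4 * dl)).
    { apply Rmult_le_compat_l; lra. }
    rewrite Hsplit. unfold Cadd, Cmul, CofR; cbn [fst snd].
    split; lra.
  - intros [v [Hv <-]].
    set (z := fmap (IZR b) x y v).
    assert (H0 : Apx a b (x,y) z (fun _ => 0%Z) 0).
    { intros eps Heps.
      set (C := Cf (IZR b) x y). assert (HC : 0 <= C) by apply Cf_pos.
      set (dl := eps / (2 * C + 1)).
      assert (Hdl : dl > 0) by (apply Rdiv_lt_0_compat; lra).
      destruct (Hv dl Hdl) as [N [L [d [HN [[Ha1 [Ha2 Ha3]] [B1 B2]]]]]].
      exists d, L. split; [exact Ha1|]. split; [exact Ha2|]. split; [intros; lia|].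
      subst N. rewrite <- (delta_eq a b beta x y hy hp HA HB Hbeta halpha d L Ha2).
      destruct (f_bound (IZR b) x y v (delta a b beta (sumZ (fun j => (d j * T a b j)%Z) L) L d))
        as [F1 F2]. fold C in F1, F2. unfold z.
      assert (Hfin2 : C * (2 * dl) < eps).
      { unfold dl. apply (Rmult_lt_reg_r (2 * C + 1)); [lra|].
        replace (C * (2 * (eps / (2 * C + 1))) * (2 * C + 1)) with (2 * C * eps) by (field; lra). nra. }
      match type of F1 with _ <= C * ?S => assert (C * S <= C * (2 * dl)) by (apply Rmult_le_compat_l; lra) end.
      split; lra. }
    assert (ha0 : (0 <= a)%Z) by lia.
    set (e := fun j => seqc a b (x,y) z (S j) j).
    assert (HA' := build a b (x,y) z ha0 H0). fold e in HA'.
    assert (He := Apx_adm a b (x,y) z e HA').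
    destruct (Apx_conv a b (x,y) z e r ltac:(lia) hr0 hr1 hal HA') as [C1 C2].
    exists (fun j => if (j <? 2)%nat then 0%Z else e (j - 2)%nat).
    assert (Ee : forall j, (fun j => if (j <? 2)%nat then 0%Z else e (j - 2)%nat) (j + 2)%nat = e j).
    { intro j. destruct (Nat.ltb_spec (j+2) 2); [lia|]. f_equal. lia. }
    split; [|split].
    + apply adm_shift2. apply (adm_ext a b 0 e); [intro j; symmetry; apply Ee | exact He].
    + apply (Un_cv_ext (fun n => fst (Fsum (x,y) e n))); [|exact C1].
      intro n. change (fst (Fsum (x,y) e n) = fst (Fsum (x,y) (fun i => (fun j => if (j <? 2)%nat then 0%Z else e (j - 2)%nat) (i + 2)%nat) n)).
      rewrite (Fsum_ext (x,y) e (fun i => (fun j => if (j <? 2)%nat then 0%Z else e (j - 2)%nat) (i + 2)%nat)); [reflexivity|].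
      intros j _. symmetry; apply Ee.
    + apply (Un_cv_ext (fun n => snd (Fsum (x,y) e n))); [|exact C2].
      intro n. change (snd (Fsum (x,y) e n) = snd (Fsum (x,y) (fun i => (fun j => if (j <? 2)%nat then 0%Z else e (j - 2)%nat) (i + 2)%nat) n)).
      rewrite (Fsum_ext (x,y) e (fun i => (fun j => if (j <? 2)%nat then 0%Z else e (j - 2)%nat) (i + 2)%nat)); [reflexivity|].
      intros j _. symmetry; apply Ee.
Qed.
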